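(* Let $\mathcal{M}_i=(E_i,\rho_i)$, $i=1,2,3$, be $q$-matroids. Then, on the ground space $E_1\oplus E_2\oplus E_3$, $(\mathcal{M}_1\oplus\mathcal{M}_2)\oplus\mathcal{M}_3=\mathcal{M}_1\oplus(\mathcal{M}_2\oplus\mathcal{M}_3)$.
   Context: Let $\mathbb{F}=\mathbb{F}_q$. A $q$-matroid is $\mathcal{M}=(E,\rho)$, $E$ a finite-dimensional $\mathbb{F}$-vector space, $\rho$ from subspaces to $\mathbb{Z}_{\ge0}$ with $0\le\rho(V)\le\dim V$, monotone and submodular. Direct sum: for $q$-matroids $(E_1,\rho_1),(E_2,\rho_2)$ and $E=E_1\oplus E_2$ (each $E_i$ identified with its image) with projections $\pi_i:E\to E_i$, $\mathcal{M}_1\oplus\mathcal{M}_2=(E,\rho)$ where $\rho(V)=\dim V+\min_{X\le V}(\rho_1(\pi_1(X))+\rho_2(\pi_2(X))-\dim X)$. *)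

(* Defs.v *)
From mathcomp Require Import all_boot all_algebra all_field.
From mathcomp Require Import boolp.
Set Implicit Arguments. Unset Strict Implicit. Unset Printing Implicit Defensive.
Import GRing.Theory.
Local Open Scope ring_scope.

Definition qmatroid_rank (F : finFieldType) (E : vectType F)
  (rho : {vspace E} -> nat) : Prop :=
  [/\ forall V : {vspace E}, (rho V <= \dim V)%N,
      forall U V : {vspace E}, (U <= V)%VS -> (rho U <= rho V)%N &
      forall U V : {vspace E}, (rho (U + V)%VS + rho (U :&: V)%VS <= rho U + rho V)%N].

Record qmatroid (F : finFieldType) (E : vectType F) := QMatroid {
  qrank :> {vspace E} -> nat;
  qrankP : qmatroid_rank qrank }.

Definition proj1 (F : finFieldType) (E1 E2 : vectType F) : 'Hom((E1 * E2)%type, E1) :=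
  linfun (fun x : (E1 * E2)%type => x.1).
Definition proj2 (F : finFieldType) (E1 E2 : vectType F) : 'Hom((E1 * E2)%type, E2) :=
  linfun (fun x : (E1 * E2)%type => x.2).

(* the set of values  dim V + rho1(pi1 X) + rho2(pi2 X) - dim X  for X <= V
   (no truncation occurs since dim X <= dim V) *)
Definition dsum_vals (F : finFieldType) (E1 E2 : vectType F)
  (rho1 : {vspace E1} -> nat) (rho2 : {vspace E2} -> nat)
  (V : {vspace (E1 * E2)%type}) : pred nat :=
  fun n => `[< exists X : {vspace (E1 * E2)%type}, (X <= V)%VS /\
     n = (\dim V + rho1 (proj1 E1 E2 @: X)%VS + rho2 (proj2 E1 E2 @: X)%VS - \dim X)%N >].

Lemma dsum_vals_ex (F : finFieldType) (E1 E2 : vectType F)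
  (rho1 : {vspace E1} -> nat) (rho2 : {vspace E2} -> nat) (V : {vspace (E1 * E2)%type}) :
  exists n, dsum_vals rho1 rho2 V n.
Proof.
exists (\dim V + rho1 (proj1 E1 E2 @: 0)%VS + rho2 (proj2 E1 E2 @: 0)%VS - \dim (0 : {vspace (E1 * E2)%type}))%N.
apply/asboolP; exists 0%VS; split => //; exact: sub0v.
Qed.

Definition dsum_rank (F : finFieldType) (E1 E2 : vectType F)
  (rho1 : {vspace E1} -> nat) (rho2 : {vspace E2} -> nat)
  (V : {vspace (E1 * E2)%type}) : nat :=
  ex_minn (dsum_vals_ex rho1 rho2 V).

Definition dsum_assoc (F : finFieldType) (E1 E2 E3 : vectType F) :
  'Hom(((E1 * E2) * E3)%type, (E1 * (E2 * E3))%type) :=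
  linfun (fun x : ((E1 * E2) * E3)%type => (x.1.1, (x.1.2, x.2))).

(* Main.v *)
From HB Require Import structures.
Require Import Defs.
From mathcomp Require Import all_boot all_algebra all_field.
From mathcomp Require Import zify.
From mathcomp Require Import boolp.
Import GRing.Theory.
Set Implicit Arguments. Unset Strict Implicit.

Section Helpers.
Local Open Scope ring_scope.
Variable F : finFieldType.

Definition Tv (E : vectType F) (G : {vspace E} -> nat) (V : {vspace E}) (n : nat) : Prop :=
  exists X : {vspace E}, (X <= V)%VS /\ n = (\dim V + G X - \dim X)%N.

Definition domn (P Q : nat -> Prop) := forall a, P a -> exists b, Q b /\ (b <= a)%N.

Lemma domn_trans P Q S : domn P Q -> domn Q S -> domn P S.
Proof.
move=> h1 h2 a /h1 [b [/h2 [c [Sc cb]] ba]]; exists c; split => //.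
exact: leq_trans cb ba.
Qed.

Lemma min_eq (P Q : nat -> Prop) m n : domn P Q -> domn Q P ->
  P m -> (forall k, P k -> (m <= k)%N) -> Q n -> (forall k, Q k -> (n <= k)%N) -> m = n.
Proof.
move=> hPQ hQP Pm mP Qn nQ; apply/eqP; rewrite eqn_leq; apply/andP; split.
- have [b [Pb bn]] := hQP n Qn; exact: leq_trans (mP _ Pb) bn.
- have [b [Qb bm]] := hPQ m Pm; exact: leq_trans (nQ _ Qb) bm.
Qed.

Lemma domn_ext (E : vectType F) (G G' : {vspace E} -> nat) V :
  (forall X, G X = G' X) -> domn (Tv G V) (Tv G' V).
Proof.
move=> hG a [X [HX ->]]; exists (\dim V + G' X - \dim X)%N; split => //.
  by exists X. by rewrite hG.
Qed.

Lemma dsum_min (E1 E2 : vectType F) (r1 : {vspace E1} -> nat) (r2 : {vspace E2} -> nat) V :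
  Tv (fun X => r1 (proj1 E1 E2 @: X)%VS + r2 (proj2 E1 E2 @: X)%VS)%N V (dsum_rank r1 r2 V)
  /\ forall k, Tv (fun X => r1 (proj1 E1 E2 @: X)%VS + r2 (proj2 E1 E2 @: X)%VS)%N V k ->
     (dsum_rank r1 r2 V <= k)%N.
Proof.
rewrite /dsum_rank; case: ex_minnP => m Hm Hmin; split.
  move: Hm => /asboolP [X [HX ->]]; exists X; split => //; by rewrite addnA.
move=> k [X [HX ->]]; apply: Hmin; apply/asboolP; exists X; split => //.
by rewrite addnA.
Qed.

Lemma keyA (E W : vectType F) (p : 'Hom(E, W)) (K : {vspace W} -> nat)
  (R : {vspace E} -> nat) (rW : {vspace W} -> nat)
  (Rmono : forall X Y, (X <= Y)%VS -> (R X <= R Y)%N)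
  (hin : forall W0, Tv K W0 (rW W0)) (hmin : forall W0 k, Tv K W0 k -> (rW W0 <= k)%N) V :
  domn (Tv (fun X => rW (p @: X)%VS + R X)%N V) (Tv (fun X => K (p @: X)%VS + R X)%N V) /\
  domn (Tv (fun X => K (p @: X)%VS + R X)%N V) (Tv (fun X => rW (p @: X)%VS + R X)%N V).
Proof.
split.
- move=> a [X [HX ->]].
  have [Y [HY eq]] := hin (p @: X)%VS.
  pose Xt := (X :&: p @^-1: Y)%VS.
  have imXt : (p @: Xt)%VS = Y.
    apply/eqP; rewrite eqEsubv; apply/andP; split.
      apply: subv_trans (limgS _ (capvSr _ _)) _.
      rewrite lpreimK //; apply: subv_trans HY (limgS _ (subvf _)).
    apply/subvP => y yY.
    have /memv_imgP [x xX yx] : y \in (p @: X)%VS by apply: (subvP HY).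
    rewrite yx in yY *; apply: memv_img.
    by rewrite memv_cap xX -memv_preim.
  have h1 := limg_ker_dim p Xt; have h2 := limg_ker_dim p X.
  have hk : (Xt :&: lker p = X :&: lker p)%VS.
    rewrite /Xt -capvA; congr (_ :&: _)%VS; apply/capv_idPr.
    by rewrite -lpreim0; apply: lpreimS; apply: sub0v.
  rewrite hk imXt in h1.
  have hR : (R Xt <= R X)%N := Rmono _ _ (capvSl X (p @^-1: Y)%VS).
  have d1 := dimvS HY; have d2 := dimvS HX.
  exists (\dim V + (K (p @: Xt)%VS + R Xt) - \dim Xt)%N; split.
    exists Xt; split => //; exact: subv_trans (capvSl _ _) HX.
  rewrite imXt eq -/Xt.
  lia.
- move=> a [X [HX ->]].
  exists (\dim V + (rW (p @: X)%VS + R X) - \dim X)%N; split; first by exists X.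
  have : (rW (p @: X)%VS <= K (p @: X)%VS)%N.
    apply: hmin; exists (p @: X)%VS; split => //; lia.
  have := dimvS HX; lia.
Qed.


Lemma transport (E E' : vectType F) (a : 'Hom(E, E')) (G : {vspace E} -> nat)
  (G' : {vspace E'} -> nat) (ha : lker a == 0%VS) (hG : forall X, G' (a @: X)%VS = G X) V :
  domn (Tv G V) (Tv G' (a @: V)%VS).
Proof.
move=> n [X [HX ->]]; exists (\dim V + G X - \dim X)%N; split => //.
exists (a @: X)%VS; split; first exact: limgS.
by rewrite hG !limg_dim_eq // (eqP ha) capv0.
Qed.

Variables (E1 E2 E3 : vectType F).
Definition af (x : ((E1*E2)*E3)%type) : (E1*(E2*E3)%type)%type := (x.1.1, (x.1.2, x.2)).
Fact af_lin : linear af. Proof. by move=> c x y. Qed.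
HB.instance Definition _ := GRing.isLinear.Build F _ _ _ af af_lin.
Definition bf (x : (E1*(E2*E3)%type)%type) : ((E1*E2)*E3)%type := ((x.1, x.2.1), x.2.2).
Fact bf_lin : linear bf. Proof. by move=> c x y. Qed.
HB.instance Definition _ := GRing.isLinear.Build F _ _ _ bf bf_lin.
Definition beta : 'Hom((E1*(E2*E3)%type)%type, ((E1*E2)*E3)%type) := linfun bf.

Lemma alphaE x : dsum_assoc E1 E2 E3 x = (x.1.1, (x.1.2, x.2)).
Proof. exact: (lfunE af x). Qed.
Lemma betaE x : beta x = ((x.1, x.2.1), x.2.2).
Proof. exact: (lfunE bf x). Qed.

Lemma ba : (beta \o dsum_assoc E1 E2 E3 = \1)%VF.
Proof. apply/lfunP => x; rewrite comp_lfunE alphaE betaE id_lfunE; by case: x => [[]]. Qed.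
Lemma ab : (dsum_assoc E1 E2 E3 \o beta = \1)%VF.
Proof. apply/lfunP => x; rewrite comp_lfunE alphaE betaE id_lfunE; by case: x => [? []]. Qed.

Lemma ker_alpha : lker (dsum_assoc E1 E2 E3) == 0%VS.
Proof.
apply/lker0P => x y h; have := congr1 beta h.
by rewrite -!(comp_lfunE beta) ba !id_lfunE.
Qed.
Lemma ker_beta : lker beta == 0%VS.
Proof.
apply/lker0P => x y h; have := congr1 (dsum_assoc E1 E2 E3) h.
by rewrite -!(comp_lfunE (dsum_assoc E1 E2 E3)) ab !id_lfunE.
Qed.

Lemma img1 X : (proj1 E1 (E2*E3)%type @: (dsum_assoc E1 E2 E3 @: X))%VS
  = (proj1 E1 E2 @: (proj1 (E1*E2)%type E3 @: X))%VS.
Proof.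
rewrite -!limg_comp; congr (_ @: _)%VS; apply/lfunP => x.
by rewrite !comp_lfunE alphaE !lfunE.
Qed.
Lemma img2 X : (proj1 E2 E3 @: (proj2 E1 (E2*E3)%type @: (dsum_assoc E1 E2 E3 @: X)))%VS
  = (proj2 E1 E2 @: (proj1 (E1*E2)%type E3 @: X))%VS.
Proof.
rewrite -!limg_comp; congr (_ @: _)%VS; apply/lfunP => x.
by rewrite !comp_lfunE alphaE !lfunE.
Qed.
Lemma img3 X : (proj2 E2 E3 @: (proj2 E1 (E2*E3)%type @: (dsum_assoc E1 E2 E3 @: X)))%VS
  = (proj2 (E1*E2)%type E3 @: X)%VS.
Proof.
rewrite -!limg_comp; congr (_ @: _)%VS; apply/lfunP => x.
by rewrite !comp_lfunE alphaE !lfunE.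
Qed.

End Helpers.
Arguments beta {F} E1 E2 E3.
Arguments ab {F} E1 E2 E3.
Arguments ba {F} E1 E2 E3.
Arguments ker_alpha {F} E1 E2 E3.
Arguments ker_beta {F} E1 E2 E3.

Theorem corollary6p3 (F : finFieldType) (E1 E2 E3 : vectType F)
  (M1 : qmatroid E1) (M2 : qmatroid E2) (M3 : qmatroid E3) :
  forall V : {vspace ((E1 * E2) * E3)%type},
    dsum_rank (dsum_rank M1 M2) M3 V
    = dsum_rank M1 (dsum_rank M2 M3) (dsum_assoc E1 E2 E3 @: V)%VS.
Proof.
move=> V.
set a := dsum_assoc E1 E2 E3.
set V' := (a @: V)%VS.
have [_ mono1 _] := qrankP M1.
have [_ mono3 _] := qrankP M3.
have [hL1 hL2] := dsum_min (dsum_rank M1 M2) M3 V.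
have [hR1 hR2] := dsum_min M1 (dsum_rank M2 M3) V'.
have [A1 A2] := @keyA F _ _ (proj1 (E1*E2)%type E3)
   (fun Y => M1 (proj1 E1 E2 @: Y)%VS + M2 (proj2 E1 E2 @: Y)%VS)%N
   (fun X => M3 (proj2 (E1*E2)%type E3 @: X)%VS) (dsum_rank M1 M2)
   (fun X Y h => mono3 _ _ (limgS _ h))
   (fun W0 => Logic.proj1 (dsum_min M1 M2 W0)) (fun W0 => Logic.proj2 (dsum_min M1 M2 W0)) V.
have [B1 B2] := @keyA F _ _ (proj2 E1 (E2*E3)%type)
   (fun Y => M2 (proj1 E2 E3 @: Y)%VS + M3 (proj2 E2 E3 @: Y)%VS)%N
   (fun X => M1 (proj1 E1 (E2*E3)%type @: X)%VS) (dsum_rank M2 M3)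
   (fun X Y h => mono1 _ _ (limgS _ h))
   (fun W0 => Logic.proj1 (dsum_min M2 M3 W0)) (fun W0 => Logic.proj2 (dsum_min M2 M3 W0)) V'.
pose GR := fun Y : {vspace (E1 * (E2 * E3)%type)%type} =>
  (M2 (proj1 E2 E3 @: (proj2 E1 (E2*E3)%type @: Y))%VS +
   M3 (proj2 E2 E3 @: (proj2 E1 (E2*E3)%type @: Y))%VS + M1 (proj1 E1 (E2*E3)%type @: Y)%VS)%N.
pose GL := fun X : {vspace ((E1 * E2)%type * E3)%type} =>
  (M1 (proj1 E1 E2 @: (proj1 (E1*E2)%type E3 @: X))%VS +
   M2 (proj2 E1 E2 @: (proj1 (E1*E2)%type E3 @: X))%VS + M3 (proj2 (E1*E2)%type E3 @: X)%VS)%N.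
have hG : forall X, GR (a @: X)%VS = GL X.
  move=> X; rewrite /GR /GL img1 img2 img3; lia.
have T1 := transport (ker_alpha E1 E2 E3) hG (V:=V).
have hG' : forall X', GL (beta E1 E2 E3 @: X')%VS = GR X'.
  move=> X'; rewrite -[in RHS](lim1g X') -(ab E1 E2 E3) limg_comp; exact: (esym (hG _)).
have T2 := transport (ker_beta E1 E2 E3) hG' (V:=V').
have bV : (beta E1 E2 E3 @: V')%VS = V by rewrite /V' -limg_comp (ba E1 E2 E3) lim1g.
rewrite bV in T2.
apply: (min_eq _ _ hL1 hL2 hR1 hR2).
- apply: domn_trans A1 _; apply: domn_trans T1 _; apply: domn_trans B2 _.
  by apply: domn_ext => X; rewrite addnC.
- apply: (domn_trans (Q := Tv (fun X => dsum_rank M2 M3 (proj2 E1 (E2*E3)%type @: X)%VS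
     + M1 (proj1 E1 (E2*E3)%type @: X)%VS)%N V')).
    by apply: domn_ext => X; rewrite addnC.
  apply: (domn_trans B1).
  apply: (domn_trans T2). exact: A2.
Qed.
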